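(* Let $p$ be a prime number and let $L$ be a $d$-generated finite $\mathbb{Z}_p$-Lie algebra of nilpotency class $c$. Then there exist a powerful $p$-central $\mathbb{Z}_p$-Lie algebra $\widehat{L}$ whose number of generators is bounded by a function of $d$ and $c$ only, and an ideal $J$ of $L$, such that: (a) $|J|$ is bounded by a function of $p,c,d$ only; (b) $L/J$ can be embedded as a subalgebra in $\widehat{L}/\Omega_1(\widehat{L})$; (c) the index $|\widehat{L}/\Omega_1(\widehat{L}):L/J|$ is bounded by a function of $p,c,d$ only.
   Context: For a $\mathbb{Z}_p$-Lie algebra $L$: $\Omega_1(L)=\{a\in L\mid pa=0\}$; $L$ is powerful if $[L,L]\subseteq pL$; $L$ is $p$-central if $\Omega_1(L)$ is contained in the center of $L$. A $\mathbb{Z}_p$-Lie algebra is $d$-generated if it is generated as a $\mathbb{Z}_p$-Lie algebra by $d$ elements. *)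

(* Defs.v *)
(* Finite Z_p-Lie algebras modelled as finite abelian
   groups (finZmodType) of p-power order with an alternating, biadditive
   bracket satisfying Jacobi. *)
From HB Require Import structures.
From mathcomp Require Import all_boot all_order all_algebra.
Set Implicit Arguments.
Unset Strict Implicit.
Unset Printing Implicit Defensive.
Import GRing.Theory.
Local Open Scope ring_scope.

Record ZpLie (p : nat) : Type := ZpLieMk {
  lie_car :> finZmodType;
  lie_br : lie_car -> lie_car -> lie_car;
  lie_brDl : forall x y z : lie_car, lie_br (x + y) z = lie_br x z + lie_br y z;
  lie_brDr : forall x y z : lie_car, lie_br x (y + z) = lie_br x y + lie_br x z;
  lie_brxx : forall x : lie_car, lie_br x x = 0;
  lie_jacobi : forall x y z : lie_car,
    lie_br x (lie_br y z) + lie_br y (lie_br z x) + lie_br z (lie_br x y) = 0;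
  lie_pgroup : p.-nat #|lie_car|
}.

Section LieDefs.
Variables (p : nat) (L : ZpLie p).
Local Notation br := (@lie_br p L).

(* additive subgroups (= Z_p-submodules, L being a finite p-group) *)
Definition addsub (B : {set L}) : bool :=
  (0 \in B) && [forall x in B, forall y in B, (x - y) \in B].
Definition subalg (B : {set L}) : bool :=
  addsub B && [forall x in B, forall y in B, br x y \in B].
Definition lie_ideal (B : {set L}) : bool :=
  addsub B && [forall x in B, forall y : L, br x y \in B].

Definition zspan (S : {set L}) : {set L} :=
  \bigcap_(B : {set L} | addsub B && (S \subset B)) B.
Definition lie_gen (S : {set L}) : {set L} :=
  \bigcap_(B : {set L} | subalg B && (S \subset B)) B.

Definition d_generated (d : nat) : Prop :=
  exists S : seq L, (size S <= d)%N /\ lie_gen [set x in S] = [set: L].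

Definition brset (A B : {set L}) : {set L} := [set br x y | x in A, y in B].

(* lower central series: lcs n = gamma_{n+1}(L), lcs 0 = L *)
Fixpoint lcs (n : nat) : {set L} :=
  if n is n'.+1 then zspan (brset (lcs n') [set: L]) else [set: L].

Definition nil_class (c : nat) : Prop :=
  lcs c = [set 0] /\ forall k, (k < c)%N -> lcs k != [set 0].

Definition Omega1 : {set L} := [set x : L | x *+ p == 0].
Definition lie_center : {set L} := [set x : L | [forall y : L, br x y == 0]].

Definition powerful : Prop :=
  zspan (brset [set: L] [set: L]) \subset [set x *+ p | x in [set: L]].
Definition pcentral : Prop := Omega1 \subset lie_center.
End LieDefs.

(* homomorphisms of Z_p-Lie algebras (additive maps between finite
   p-groups are automatically Z_p-linear) *)
Definition lie_hom (p : nat) (L M : ZpLie p) (f : L -> M) : Prop :=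
  (forall x y : L, f (x + y) = f x + f y) /\
  (forall x y : L, f (lie_br x y) = lie_br (f x) (f y)).

(* Main.v *)
Require Import Defs.
From HB Require Import structures.
From mathcomp Require Import all_boot all_order all_algebra all_fingroup all_solvable.
From mathcomp Require Import zify.
Require Import Defs.
Set Implicit Arguments. Unset Strict Implicit. Unset Printing Implicit Defensive.
Import GRing.Theory FinRing.Theory.
Local Open Scope ring_scope.

Definition addsubV (V : finZmodType) (B : {set V}) : bool :=
  (0 \in B) && [forall x in B, forall y in B, (x - y) \in B].
Definition spanV (V : finZmodType) (S : {set V}) : {set V} :=
  \bigcap_(B : {set V} | addsubV B && (S \subset B)) B.

Lemma addsubP (V : finZmodType) (B : {set V}) :
  reflect (0 \in B /\ forall x y, x \in B -> y \in B -> x - y \in B) (addsubV B).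
Proof.
apply: (iffP andP) => [[h0 /forall_inP h]|[h0 h]]; split => //.
  by move=> x y xB yB; exact: (forall_inP (h x xB) y yB).
by apply/forall_inP => x xB; apply/forall_inP => y yB; exact: h.
Qed.

Lemma as0 (V : finZmodType) (B : {set V}) : addsubV B -> 0 \in B.
Proof. by case/addsubP. Qed.
Lemma asB (V : finZmodType) (B : {set V}) x y : addsubV B -> x \in B -> y \in B -> x - y \in B.
Proof. by case/addsubP => _ h; exact: h. Qed.
Lemma asN (V : finZmodType) (B : {set V}) x : addsubV B -> x \in B -> - x \in B.
Proof. by move=> hB xB; rewrite -sub0r asB // as0. Qed.
Lemma asD (V : finZmodType) (B : {set V}) x y : addsubV B -> x \in B -> y \in B -> x + y \in B.
Proof. by move=> hB xB yB; rewrite -[y]opprK asB // asN. Qed.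
Lemma asMn (V : finZmodType) (B : {set V}) x n : addsubV B -> x \in B -> x *+ n \in B.
Proof. by move=> hB xB; elim: n => [|n IH]; rewrite ?mulr0n ?as0 // mulrS asD. Qed.
Lemma asSum (V : finZmodType) (B : {set V}) (I : Type) (r : seq I) (P : pred I) (F : I -> V) :
  addsubV B -> (forall i, P i -> F i \in B) -> \sum_(i <- r | P i) F i \in B.
Proof.
move=> hB hF; apply: (big_ind (fun x => x \in B)); [exact: as0| |exact: hF].
by move=> x y; exact: asD.
Qed.

Lemma spanV_addsub (V : finZmodType) (S : {set V}) : addsubV (spanV S).
Proof.
apply/addsubP; split.
  by apply/bigcapP => B /andP[hB _]; exact: as0.
move=> x y /bigcapP hx /bigcapP hy; apply/bigcapP => B hB.
by case/andP: (hB) => hB' _; apply: asB => //; [exact: hx|exact: hy].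
Qed.
Lemma spanV_sub (V : finZmodType) (S : {set V}) : S \subset spanV S.
Proof. by apply/subsetP => x xS; apply/bigcapP => B /andP[_ /subsetP]; apply. Qed.
Lemma spanV_min (V : finZmodType) (S B : {set V}) : addsubV B -> S \subset B -> spanV S \subset B.
Proof. by move=> hB hS; apply: bigcap_inf; rewrite hB hS. Qed.
Lemma spanV_id (V : finZmodType) (B : {set V}) : addsubV B -> spanV B = B.
Proof. by move=> hB; apply/eqP; rewrite eqEsubset spanV_min // spanV_sub. Qed.

Definition Wc (V : finZmodType) (W : {set V}) := spanV W.
Definition Rc (V : finZmodType) (W R : {set V}) := spanV (R :&: spanV W).
Definition qrep (V : finZmodType) (W R : {set V}) (v : V) : V :=
  odflt v [pick w | (w - v) \in Rc W R].
Definition qkeep (V : finZmodType) (W R : {set V}) (v : V) : bool :=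
  (v \in Wc W) && (qrep W R v == v).

Record qT (V : finZmodType) (W R : {set V}) := QT { qval : V; qvalP : qkeep W R qval }.
HB.instance Definition _ (V : finZmodType) (W R : {set V}) := [isSub for (@qval V W R)].
HB.instance Definition _ (V : finZmodType) (W R : {set V}) := [Finite of qT W R by <:].

Lemma Rc_addsub (V : finZmodType) (W R : {set V}) : addsubV (Rc W R).
Proof. exact: spanV_addsub. Qed.
Lemma Wc_addsub (V : finZmodType) (W : {set V}) : addsubV (Wc W).
Proof. exact: spanV_addsub. Qed.
Lemma RcW (V : finZmodType) (W R : {set V}) x : x \in Rc W R -> x \in Wc W.
Proof.
move=> hx; have /subsetP := spanV_min (spanV_addsub W) (subsetIr R (spanV W)).
by apply.
Qed.

Lemma qrepP (V : finZmodType) (W R : {set V}) v : qrep W R v - v \in Rc W R.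
Proof.
rewrite /qrep; case: pickP => [w hw|h] //=.
by move: (h v); rewrite subrr as0 // Rc_addsub.
Qed.
Lemma qrep_eq (V : finZmodType) (W R : {set V}) u v :
  u - v \in Rc W R -> qrep W R u = qrep W R v.
Proof.
move=> huv; rewrite /qrep; have -> : [pick w | w - u \in Rc W R] = [pick w | w - v \in Rc W R].
  apply: eq_pick => w /=; apply/idP/idP => h.
    by have := asD (Rc_addsub W R) h huv; rewrite addrA subrK.
  by have := asB (Rc_addsub W R) h huv; rewrite opprB addrA subrK.
case: pickP => //= h; move: (h v); rewrite subrr as0 //; exact: Rc_addsub.
Qed.
Lemma qrep_Wc (V : finZmodType) (W R : {set V}) v : v \in Wc W -> qrep W R v \in Wc W.
Proof.
move=> hv; have := asD (Wc_addsub W) (RcW (qrepP W R v)) hv; by rewrite subrK.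
Qed.
Lemma qrep_id (V : finZmodType) (W R : {set V}) v : qrep W R (qrep W R v) = qrep W R v.
Proof. exact/qrep_eq/qrepP. Qed.
Lemma qkeep_rep (V : finZmodType) (W R : {set V}) v : v \in Wc W -> qkeep W R (qrep W R v).
Proof. by move=> hv; rewrite /qkeep qrep_Wc // qrep_id eqxx. Qed.

Definition qzero (V : finZmodType) (W R : {set V}) : qT W R :=
  @QT V W R (qrep W R 0) (@qkeep_rep V W R 0 (as0 (Wc_addsub W))).
Definition qclass (V : finZmodType) (W R : {set V}) (v : V) : qT W R :=
  insubd (qzero W R) (qrep W R v).

Lemma qval_in (V : finZmodType) (W R : {set V}) (a : qT W R) : qval a \in Wc W.
Proof. by case/andP: (qvalP a). Qed.
Lemma qval_rep (V : finZmodType) (W R : {set V}) (a : qT W R) : qrep W R (qval a) = qval a.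
Proof. by case/andP: (qvalP a) => _ /eqP. Qed.
Lemma val_qclass (V : finZmodType) (W R : {set V}) v :
  v \in Wc W -> qval (qclass W R v) = qrep W R v.
Proof. by move=> hv; rewrite /qclass /insubd insubT //= qkeep_rep. Qed.
Lemma qclass_val (V : finZmodType) (W R : {set V}) (a : qT W R) : qclass W R (qval a) = a.
Proof. by apply: val_inj => /=; rewrite val_qclass ?qval_in // qval_rep. Qed.
Lemma qclass_eq (V : finZmodType) (W R : {set V}) u v :
  u \in Wc W -> v \in Wc W -> (qclass W R u = qclass W R v) <-> (u - v \in Rc W R).
Proof.
move=> hu hv; split => [h|h].
  have := congr1 (@qval _ _ _) h; rewrite !val_qclass // => e.
  have := asB (Rc_addsub W R) (qrepP W R v) (qrepP W R u).
  by rewrite -e opprB addrC addrA subrK.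
by apply: val_inj; rewrite /= !val_qclass // (qrep_eq h).
Qed.
Lemma qclass_congr (V : finZmodType) (W R : {set V}) u v :
  u \in Wc W -> v \in Wc W -> u - v \in Rc W R -> qclass W R u = qclass W R v.
Proof. by move=> hu hv /(qclass_eq R hu hv). Qed.
Lemma qval_class_mod (V : finZmodType) (W R : {set V}) v :
  v \in Wc W -> qval (qclass W R v) - v \in Rc W R.
Proof. by move=> hv; rewrite val_qclass // qrepP. Qed.

Definition qadd (V : finZmodType) (W R : {set V}) (a b : qT W R) : qT W R :=
  qclass W R (qval a + qval b).
Definition qopp (V : finZmodType) (W R : {set V}) (a : qT W R) : qT W R :=
  qclass W R (- qval a).

Ltac qsimpl := repeat first [ assumption | apply: asD | apply: asB | apply: asN | apply: qval_in
   | apply: Wc_addsub | apply: Rc_addsub | apply: qrep_Wc | apply: as0 ].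


Lemma qclass_addl (V : finZmodType) (W R : {set V}) u v : u \in Wc W -> v \in Wc W ->
  qclass W R (qval (qclass W R u) + v) = qclass W R (u + v).
Proof.
move=> hu hv; apply: qclass_congr; [qsimpl|qsimpl|].
by rewrite opprD addrACA subrr addr0 qval_class_mod.
Qed.
Lemma qclass_addr (V : finZmodType) (W R : {set V}) u v : u \in Wc W -> v \in Wc W ->
  qclass W R (u + qval (qclass W R v)) = qclass W R (u + v).
Proof. by move=> hu hv; rewrite addrC qclass_addl // addrC. Qed.
Lemma qclass_oppc (V : finZmodType) (W R : {set V}) u : u \in Wc W ->
  qclass W R (- qval (qclass W R u)) = qclass W R (- u).
Proof.
move=> hu; apply: qclass_congr; [qsimpl|qsimpl|].
by rewrite opprK addrC -opprB; apply: asN; [exact: Rc_addsub|exact: qval_class_mod].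
Qed.

Lemma qaddA (V : finZmodType) (W R : {set V}) : associative (@qadd V W R).
Proof.
move=> a b c; rewrite /qadd qclass_addl ?qclass_addr ?addrA //; qsimpl.
Qed.
Lemma qaddC (V : finZmodType) (W R : {set V}) : commutative (@qadd V W R).
Proof. by move=> a b; rewrite /qadd addrC. Qed.
Lemma qadd0 (V : finZmodType) (W R : {set V}) : left_id (qzero W R) (@qadd V W R).
Proof.
move=> a; rewrite /qadd.
have -> : qval (qzero W R) = qval (qclass W R 0) by rewrite val_qclass //; qsimpl.
by rewrite qclass_addl ?add0r ?qclass_val //; qsimpl.
Qed.
Lemma qaddN (V : finZmodType) (W R : {set V}) : left_inverse (qzero W R) (@qopp V W R) (@qadd V W R).
Proof.
move=> a; rewrite /qadd /qopp qclass_addl ?addNr //; qsimpl.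
apply: val_inj => /=; rewrite val_qclass //; qsimpl.
Qed.

HB.instance Definition _ (V : finZmodType) (W R : {set V}) :=
  GRing.isZmodule.Build (qT W R) (@qaddA V W R) (@qaddC V W R) (@qadd0 V W R) (@qaddN V W R).


Record isLieB (V : zmodType) (br : V -> V -> V) : Prop := IsLieB {
  bDl : forall x y z, br (x + y) z = br x z + br y z;
  bDr : forall x y z, br x (y + z) = br x y + br x z;
  bxx : forall x, br x x = 0;
  bJ : forall x y z, br x (br y z) + br y (br z x) + br z (br x y) = 0 }.

Lemma b0l (V : zmodType) (br : V -> V -> V) (h : isLieB br) x : br 0 x = 0.
Proof. by apply: (addrI (br 0 x)); rewrite -(bDl h) !addr0. Qed.
Lemma b0r (V : zmodType) (br : V -> V -> V) (h : isLieB br) x : br x 0 = 0.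
Proof. by apply: (addrI (br x 0)); rewrite -(bDr h) !addr0. Qed.
Lemma bNl (V : zmodType) (br : V -> V -> V) (h : isLieB br) x y : br (- x) y = - br x y.
Proof. by apply: (addrI (br x y)); rewrite -(bDl h) !subrr (b0l h). Qed.
Lemma bNr (V : zmodType) (br : V -> V -> V) (h : isLieB br) x y : br x (- y) = - br x y.
Proof. by apply: (addrI (br x y)); rewrite -(bDr h) !subrr (b0r h). Qed.
Lemma bBl (V : zmodType) (br : V -> V -> V) (h : isLieB br) x y z : br (x - y) z = br x z - br y z.
Proof. by rewrite (bDl h) (bNl h). Qed.
Lemma bBr (V : zmodType) (br : V -> V -> V) (h : isLieB br) x y z : br x (y - z) = br x y - br x z.
Proof. by rewrite (bDr h) (bNr h). Qed.
Lemma bC (V : zmodType) (br : V -> V -> V) (h : isLieB br) x y : br y x = - br x y.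
Proof.
have := bxx h (x + y); rewrite (bDl h) !(bDr h) !(bxx h) add0r addr0 => /eqP.
by rewrite addr_eq0 => /eqP ->; rewrite opprK.
Qed.
Lemma bMnl (V : zmodType) (br : V -> V -> V) (h : isLieB br) x y n : br (x *+ n) y = br x y *+ n.
Proof. by elim: n => [|n IH]; rewrite ?mulr0n ?(b0l h) // !mulrS (bDl h) IH. Qed.
Lemma bMnr (V : zmodType) (br : V -> V -> V) (h : isLieB br) x y n : br x (y *+ n) = br x y *+ n.
Proof. by elim: n => [|n IH]; rewrite ?mulr0n ?(b0r h) // !mulrS (bDr h) IH. Qed.
Lemma bsuml (V : zmodType) (br : V -> V -> V) (h : isLieB br) (I : Type) (r : seq I) (P : pred I) F y :
  br (\sum_(i <- r | P i) F i) y = \sum_(i <- r | P i) br (F i) y.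
Proof. by apply: (big_morph (fun x => br x y)) => [a b|]; rewrite ?(bDl h) ?(b0l h). Qed.
Lemma bsumr (V : zmodType) (br : V -> V -> V) (h : isLieB br) (I : Type) (r : seq I) (P : pred I) F y :
  br y (\sum_(i <- r | P i) F i) = \sum_(i <- r | P i) br y (F i).
Proof. by apply: (big_morph (fun x => br y x)) => [a b|]; rewrite ?(bDr h) ?(b0r h). Qed.

Lemma qclass_add (V : finZmodType) (W R : {set V}) u v : u \in Wc W -> v \in Wc W ->
  qclass W R (u + v) = qclass W R u + qclass W R v.
Proof.
move=> hu hv; rewrite [RHS]/+%R /= /qadd qclass_addl ?qclass_addr //; qsimpl.
Qed.
Lemma qclass0 (V : finZmodType) (W R : {set V}) : qclass W R 0 = 0.
Proof. by apply: val_inj => /=; rewrite val_qclass //; qsimpl. Qed.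
Lemma qclassN (V : finZmodType) (W R : {set V}) u : u \in Wc W ->
  qclass W R (- u) = - qclass W R u.
Proof. by move=> hu; rewrite [RHS]/-%R /= /qopp qclass_oppc. Qed.
Lemma qclassB (V : finZmodType) (W R : {set V}) u v : u \in Wc W -> v \in Wc W ->
  qclass W R (u - v) = qclass W R u - qclass W R v.
Proof. by move=> hu hv; rewrite qclass_add ?qclassN //; qsimpl. Qed.
Lemma qclassMn (V : finZmodType) (W R : {set V}) u n : u \in Wc W ->
  qclass W R (u *+ n) = qclass W R u *+ n.
Proof.
move=> hu; elim: n => [|n IH]; first by rewrite !mulr0n qclass0.
rewrite !mulrS qclass_add ?IH //; apply: asMn; qsimpl.
Qed.
Lemma qclass_eq0 (V : finZmodType) (W R : {set V}) u : u \in Wc W ->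
  (qclass W R u = 0) <-> (u \in Rc W R).
Proof.
move=> hu; rewrite -(qclass0 W R).
have h0 : (0:V) \in Wc W by qsimpl.
split => [h|h]; first by have := (qclass_eq R hu h0).1 h; rewrite subr0.
by apply: qclass_congr => //; rewrite subr0.
Qed.
Lemma qclass_surj (V : finZmodType) (W R : {set V}) (a : qT W R) :
  exists2 u, u \in Wc W & a = qclass W R u.
Proof. by exists (qval a); [exact: qval_in| rewrite qclass_val]. Qed.
Lemma pnat_of_exp (V : finZmodType) (p e : nat) :
  prime p -> (forall x : V, x *+ (p ^ e) = 0) -> p.-nat #|V|.
Proof.
move=> pp hx.
have : (p.-group [set: V])%g.
  rewrite -pnat_exponent.
  have : (exponent [set: V] %| p ^ e)%N.
    apply/exponentP => x _; rewrite zmodXgE hx; done.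
  by move/dvdn_pfactor => /(_ pp) [k _ ->]; rewrite pnatX pnat_id.
by rewrite /pgroup cardsT.
Qed.

Definition qbr (V : finZmodType) (W R : {set V}) (br : V -> V -> V) (a b : qT W R) : qT W R :=
  qclass W R (br (qval a) (qval b)).

Definition qhyps (V : finZmodType) (W R : {set V}) (br : V -> V -> V) : Prop :=
  [/\ isLieB br, (forall u v, u \in Wc W -> v \in Wc W -> br u v \in Wc W)
    & (forall u v, u \in Rc W R -> v \in Wc W -> br u v \in Rc W R)].

Lemma qbr_class (V : finZmodType) (W R : {set V}) (br : V -> V -> V) (H : qhyps W R br) u v :
  u \in Wc W -> v \in Wc W -> qbr br (qclass W R u) (qclass W R v) = qclass W R (br u v).
Proof.
case: H => h hWW hRW hu hv; rewrite /qbr; apply: qclass_congr; [apply: (hWW); qsimpl|exact: hWW|].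
set x := qval _; set y := qval _.
have e : br x y - br u v = br (x - u) y + br u (y - v) by rewrite (bBl h) (bBr h) addrA subrK.
rewrite e; apply: asD; first exact: Rc_addsub.
  by apply: (hRW); [exact: qval_class_mod| qsimpl].
rewrite (bC h); apply: asN; first exact: Rc_addsub.
by apply: (hRW) => //; exact: qval_class_mod.
Qed.

Lemma qbr_lie (V : finZmodType) (W R : {set V}) (br : V -> V -> V) (H : qhyps W R br) :
  isLieB (@qbr V W R br).
Proof.
have [h hWW hRW] := H.
split.
- move=> a b c; have [u hu ->] := qclass_surj a; have [v hv ->] := qclass_surj b.
  have [w hw ->] := qclass_surj c.
  by rewrite -qclass_add // !qbr_class //; qsimpl; rewrite (bDl h) qclass_add //; apply: (hWW).
- move=> a b c; have [u hu ->] := qclass_surj a; have [v hv ->] := qclass_surj b.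
  have [w hw ->] := qclass_surj c.
  by rewrite -qclass_add // !qbr_class //; qsimpl; rewrite (bDr h) qclass_add //; apply: (hWW).
- move=> a; have [u hu ->] := qclass_surj a.
  by rewrite qbr_class // (bxx h) qclass0.
- move=> a b c; have [u hu ->] := qclass_surj a; have [v hv ->] := qclass_surj b.
  have [w hw ->] := qclass_surj c.
  rewrite !qbr_class //; try (apply: (hWW) => //).
  have hb : forall x y z, x \in Wc W -> y \in Wc W -> z \in Wc W -> br x (br y z) \in Wc W.
    by move=> x y z hx hy hz; apply: (hWW) => //; apply: (hWW).
  by rewrite -(qclass0 W R) -(bJ h u v w) !qclass_add //; try apply: asD; try exact: Wc_addsub; try exact: hb.
Qed.

Lemma qexp (V : finZmodType) (W R : {set V}) n :
  (forall v, v \in Wc W -> v *+ n = 0) -> forall a : qT W R, a *+ n = 0.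
Proof.
move=> hn a; have [u hu ->] := qclass_surj a.
by rewrite -qclassMn // hn // qclass0.
Qed.

Definition qLie (p e : nat) (pp : prime p) (V : finZmodType) (W R : {set V}) (br : V -> V -> V)
  (H : qhyps W R br) (hexp : forall v, v \in Wc W -> v *+ (p ^ e) = 0) : ZpLie p :=
  @ZpLieMk p (qT W R) (qbr br) (bDl (qbr_lie H)) (bDr (qbr_lie H)) (bxx (qbr_lie H))
    (bJ (qbr_lie H)) (pnat_of_exp pp (qexp hexp)).

Lemma LieL (p : nat) (L : ZpLie p) : isLieB (@lie_br p L).
Proof. split; [exact: lie_brDl|exact: lie_brDr|exact: lie_brxx|exact: lie_jacobi]. Qed.

Lemma addsubE (p : nat) (L : ZpLie p) (B : {set L}) : addsub B = addsubV B.
Proof. by []. Qed.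
Lemma zspanE (p : nat) (L : ZpLie p) (S : {set L}) : zspan S = spanV S.
Proof. by []. Qed.

Lemma asT (V : finZmodType) : addsubV [set: V].
Proof. by apply/addsubP; split => *; rewrite inE. Qed.

Lemma lcs_addsub (p : nat) (L : ZpLie p) n : addsubV (lcs L n).
Proof. by case: n => [|n] /=; [exact: asT| exact: spanV_addsub]. Qed.

Lemma lcs_br (p : nat) (L : ZpLie p) n x y : x \in lcs L n -> lie_br x y \in lcs L n.+1.
Proof.
move=> hx /=; apply: (subsetP (spanV_sub _)).
by apply/imset2P; exists x y; rewrite ?inE.
Qed.

Lemma lcs_decr (p : nat) (L : ZpLie p) n : lcs L n.+1 \subset lcs L n.
Proof.
elim: n => [|n IH]; first by apply/subsetP => x; rewrite inE.
rewrite [lcs L n.+2]/=; apply: spanV_min; first exact: lcs_addsub.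
apply/subsetP => z /imset2P[x y hx _ ->]; apply: lcs_br.
exact: (subsetP IH).
Qed.

Lemma lcs_mono (p : nat) (L : ZpLie p) m n : (m <= n)%N -> lcs L n \subset lcs L m.
Proof.
move=> /subnK <-; elim: (n - m)%N => [|k IH]; first by rewrite add0n.
by rewrite addSn; apply: subset_trans IH; exact: lcs_decr.
Qed.

Lemma pre_addsub (V : finZmodType) (f : V -> V) (T : {set V}) :
  (forall x y, f (x - y) = f x - f y) -> addsubV T -> addsubV [set y | f y \in T].
Proof.
move=> hf hT; apply/addsubP; split.
  by rewrite inE; have := hf 0 0; rewrite subrr => ->; rewrite subrr as0.
by move=> x y; rewrite !inE hf => hx hy; apply: asB.
Qed.

Lemma br_lcs (p : nat) (L : ZpLie p) i j x y :
  x \in lcs L i -> y \in lcs L j -> lie_br x y \in lcs L (i + j).+1.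
Proof.
have h := LieL L.
elim: j i x y => [|j IH] i x y hx hy; first by rewrite addn0; exact: lcs_br.
have hB : addsubV [set z | lie_br x z \in lcs L (i + j.+1).+1].
  by apply: pre_addsub; [move=> a b; rewrite (bBr h)| exact: lcs_addsub].
suff: lcs L j.+1 \subset [set z | lie_br x z \in lcs L (i + j.+1).+1].
  by move/subsetP/(_ y hy); rewrite inE.
rewrite [lcs L j.+1]/=; apply: spanV_min => //.
apply/subsetP => z /imset2P[a b ha _ ->]; rewrite inE.
have J := bJ h x a b.
have -> : lie_br x (lie_br a b) = - lie_br a (lie_br b x) - lie_br b (lie_br x a).
  apply: (addIr (lie_br a (lie_br b x) + lie_br b (lie_br x a))).
  by rewrite addrA J -opprD addNr.
apply: asB; first exact: lcs_addsub.
  apply: asN; first exact: lcs_addsub.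
  rewrite (bC h); apply: asN; first exact: lcs_addsub.
  have -> : (i + j.+1).+1 = ((i.+1 + j).+1)%N by rewrite addSn addnS.
  apply: IH => //; rewrite (bC h); apply: asN; first exact: lcs_addsub.
  exact: lcs_br.
rewrite (bC h); apply: asN; first exact: lcs_addsub.
rewrite addnS; apply: lcs_br; exact: IH.
Qed.

Fixpoint monA (p : nat) (L : ZpLie p) (S : seq L) (n : nat) : seq (L * nat) :=
  if n is n'.+1 then
    monA S n' ++ [seq (lie_br a.1 b.1, (a.2 + b.2).+1) | a <- monA S n', b <- monA S n']
  else [seq (x, 0%N) | x <- S].

Fixpoint sz (d n : nat) : nat := if n is n'.+1 then (sz d n' + sz d n' * sz d n')%N else d.

Lemma size_monA (p : nat) (L : ZpLie p) (S : seq L) d n :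
  (size S <= d)%N -> (size (monA S n) <= sz d n)%N.
Proof.
move=> hS; elim: n => [|n IH] /=; first by rewrite size_map.
by rewrite size_cat size_allpairs leq_add // leq_mul.
Qed.

Lemma monA_lcs (p : nat) (L : ZpLie p) (S : seq L) n x :
  x \in monA S n -> x.1 \in lcs L x.2.
Proof.
elim: n x => [|n IH] x /=; first by case/mapP => y _ ->; rewrite inE.
rewrite mem_cat => /orP[/IH //|/allpairsP[[a b] [ha hb ->]]] /=.
by apply: br_lcs; apply: IH.
Qed.

Lemma monA_sub (p : nat) (L : ZpLie p) (S : seq L) m n :
  (m <= n)%N -> {subset monA S m <= monA S n}.
Proof.
move=> /subnK <-; elim: (n - m)%N => [|k IH] x; first by rewrite add0n.
by rewrite addSn /= mem_cat => /IH ->.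
Qed.

Lemma monA_deg (p : nat) (L : ZpLie p) (S : seq L) n x :
  x \in monA S n -> x \in monA S x.2.
Proof.
elim: n x => [|n IH] x /=; first by case/mapP => y hy ->; rewrite /= map_f.
rewrite mem_cat => /orP[/IH //|/allpairsP[[a b] [ha hb ->]]] /=.
have ha' := IH _ ha; have hb' := IH _ hb.
set m := maxn a.2 b.2.
have hm : (m.+1 <= (a.2 + b.2).+1)%N by rewrite ltnS geq_max leq_addr leq_addl.
apply: (monA_sub hm) => /=; rewrite mem_cat; apply/orP; right.
apply/allpairsP; exists (a, b); split => //.
  by apply: (monA_sub _ ha'); rewrite leq_maxl.
by apply: (monA_sub _ hb'); rewrite leq_maxr.
Qed.

Definition Mk (p : nat) (L : ZpLie p) (S : seq L) n k : {set L} :=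
  [set y : L | has (fun x => (x.1 == y) && (k <= x.2)%N) (monA S n)].

Lemma MkP (p : nat) (L : ZpLie p) (S : seq L) n k y :
  reflect (exists2 x, x \in monA S n & x.1 = y /\ (k <= x.2)%N) (y \in Mk S n k).
Proof.
rewrite inE; apply: (iffP hasP) => [[x hx /andP[/eqP <- hk]]|[x hx [<- hk]]].
  by exists x.
by exists x => //; rewrite eqxx.
Qed.

Lemma span_br2 (p : nat) (L : ZpLie p) (A B C : {set L}) :
  addsubV C -> (forall a b, a \in A -> b \in B -> lie_br a b \in C) ->
  forall u v, u \in spanV A -> v \in spanV B -> lie_br u v \in C.
Proof.
have h := LieL L.
move=> hC hAB u v hu hv.
have s1 : forall a, a \in A -> lie_br a v \in C.
  move=> a ha; have : spanV B \subset [set z | lie_br a z \in C].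
    apply: spanV_min; first by apply: pre_addsub => // x y; rewrite (bBr h).
    by apply/subsetP => z hz; rewrite inE hAB.
  by move/subsetP/(_ v hv); rewrite inE.
have : spanV A \subset [set z | lie_br z v \in C].
  apply: spanV_min; first by apply: pre_addsub => // x y; rewrite (bBl h).
  by apply/subsetP => z hz; rewrite inE s1.
by move/subsetP/(_ u hu); rewrite inE.
Qed.

Lemma brM (p : nat) (L : ZpLie p) (S : seq L) c k a b :
  lcs L c = [set 0] -> a \in Mk S c k -> b \in Mk S c 0 ->
  lie_br a b \in spanV (Mk S c k.+1).
Proof.
move=> hc /MkP[x hx [<- hk]] /MkP[y hy [<- _]].
case: (ltnP (x.2 + y.2).+1 c) => hd.
  apply: (subsetP (spanV_sub _)); apply/MkP.
  exists (lie_br x.1 y.1, (x.2 + y.2).+1); last by split => //=; rewrite ltnS (leq_trans hk) // leq_addr.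
  have hx' := monA_deg hx; have hy' := monA_deg hy.
  apply: (monA_sub (ltnW hd)).
  set m := maxn x.2 y.2.
  have hm : (m.+1 <= (x.2 + y.2).+1)%N by rewrite ltnS geq_max leq_addr leq_addl.
  apply: (monA_sub hm) => /=; rewrite mem_cat; apply/orP; right.
  apply/allpairsP; exists (x, y); split => //.
    by apply: (monA_sub _ hx'); rewrite leq_maxl.
  by apply: (monA_sub _ hy'); rewrite leq_maxr.
have := br_lcs (monA_lcs hx) (monA_lcs hy).
move/(subsetP (lcs_mono L hd)); rewrite hc inE => /eqP ->.
exact: as0 (spanV_addsub _).
Qed.

Lemma spanV_mono (V : finZmodType) (A B : {set V}) : A \subset B -> spanV A \subset spanV B.
Proof. by move=> hAB; apply: spanV_min; [exact: spanV_addsub| exact: subset_trans (spanV_sub B)]. Qed.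

Lemma Mk_decr (p : nat) (L : ZpLie p) (S : seq L) n k : Mk S n k.+1 \subset Mk S n k.
Proof.
apply/subsetP => y /MkP[x hx [hy hk]]; apply/MkP; exists x => //; split => //.
exact: ltnW.
Qed.

Lemma lcs_span0 (p : nat) (L : ZpLie p) (S : seq L) c :
  lie_gen [set x in S] = [set: L] -> lcs L c = [set 0] ->
  [set: L] \subset spanV (Mk S c 0).
Proof.
move=> hg hc; case: c hc => [|c] hc.
  apply/subsetP => x _; have : x \in lcs L 0 by rewrite inE.
  by rewrite hc inE => /eqP ->; exact: as0 (spanV_addsub _).
rewrite -hg; apply: bigcap_inf; apply/andP; split.
  rewrite /subalg addsubE spanV_addsub /=.
  apply/forall_inP => x hx; apply/forall_inP => y hy.
  apply: (span_br2 (spanV_addsub _) _ hx hy) => a b ha hb.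
  exact: (subsetP (spanV_mono (Mk_decr S c.+1 0))) (brM hc ha hb).
apply/subsetP => x; rewrite inE => hx; apply: (subsetP (spanV_sub _)); apply/MkP.
exists (x, 0%N) => //; apply: (monA_sub (leq0n c.+1)) => /=; exact: map_f.
Qed.

Lemma lcs_span (p : nat) (L : ZpLie p) (S : seq L) c :
  lie_gen [set x in S] = [set: L] -> lcs L c = [set 0] ->
  forall k, lcs L k \subset spanV (Mk S c k).
Proof.
move=> hg hc; elim => [|k IH]; first exact: lcs_span0.
rewrite [lcs L k.+1]/=; apply: spanV_min; first exact: spanV_addsub.
apply/subsetP => z /imset2P[a b ha hb ->].
apply: (span_br2 (spanV_addsub _) _ (subsetP IH a ha) (subsetP (lcs_span0 hg hc) b hb)).
move=> x y hx hy; exact: brM.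
Qed.

Definition VT (R : finZmodType) (c : nat) := {ffun 'I_c -> R}.
HB.instance Definition _ (R : finZmodType) c := GRing.Zmodule.on (VT R c).
HB.instance Definition _ (R : finZmodType) c := Finite.on (VT R c).

Definition dl (p : nat) (L : ZpLie p) (c n : nat) (x : L) : {ffun 'I_c -> L} :=
  [ffun k : 'I_c => if (k : nat) == n then x else 0].

Definition bet (p : nat) (L : ZpLie p) (c : nat) (u v : {ffun 'I_c -> L}) : {ffun 'I_c -> L} :=
  \sum_(i < c) \sum_(j < c) dl c (i + j).+1 (lie_br (u i) (v j)).

Lemma dlE (p : nat) (L : ZpLie p) c n (x : L) (k : 'I_c) : dl c n x k = if (k : nat) == n then x else 0.
Proof. by rewrite ffunE. Qed.
Lemma dlD (p : nat) (L : ZpLie p) c n (x y : L) : dl c n (x + y) = dl c n x + dl c n y.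
Proof. by apply/ffunP => k; rewrite !ffunE; case: eqP; rewrite ?addr0. Qed.
Lemma dl0 (p : nat) (L : ZpLie p) c n : dl c n (0 : L) = 0.
Proof. by apply/ffunP => k; rewrite !ffunE; case: eqP. Qed.
Lemma dlN (p : nat) (L : ZpLie p) c n (x : L) : dl c n (- x) = - dl c n x.
Proof. by apply/ffunP => k; rewrite !ffunE; case: eqP; rewrite ?oppr0. Qed.
Lemma dlB (p : nat) (L : ZpLie p) c n (x y : L) : dl c n (x - y) = dl c n x - dl c n y.
Proof. by rewrite dlD dlN. Qed.
Lemma dlMn (p : nat) (L : ZpLie p) c n (x : L) m : dl c n (x *+ m) = dl c n x *+ m.
Proof. by apply/ffunP => k; rewrite ffunMnE !ffunE; case: eqP; rewrite ?mul0rn. Qed.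
Lemma dl_out (p : nat) (L : ZpLie p) c n (x : L) : (c <= n)%N -> dl c n x = 0.
Proof.
move=> hn; apply/ffunP => k; rewrite !ffunE; case: eqP => // ek.
by move: (ltn_ord k); rewrite ek ltnNge hn.
Qed.
Lemma dl_sum (p : nat) (L : ZpLie p) c n (I : Type) (r : seq I) (P : pred I) (F : I -> L) :
  dl c n (\sum_(i <- r | P i) F i) = \sum_(i <- r | P i) dl c n (F i).
Proof. by apply: (big_morph (dl c n)) => [a b|]; rewrite ?dlD ?dl0. Qed.

Lemma sum_delta (M : zmodType) (c n : nat) (F : nat -> M) :
  \sum_(i < c) (if (i : nat) == n then F i else 0) = if (n < c)%N then F n else 0.
Proof.
rewrite -(big_mkord xpredT (fun i => if i == n then F i else 0)).
elim: c => [|c IH]; first by rewrite big_nil.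
rewrite big_nat_recr //= IH; case: (ltngtP n c) => h.
- by rewrite ltnS (ltnW h) addr0.
- by rewrite ltnS leqNgt h /= addr0.
- by rewrite h ltnSn add0r.
Qed.

Lemma decomp (p : nat) (L : ZpLie p) c (u : {ffun 'I_c -> L}) : u = \sum_(i < c) dl c i (u i).
Proof.
apply/ffunP => k; rewrite sum_ffunE.
transitivity (\sum_(i < c) (if (i : nat) == k then u k else 0)).
  by rewrite (sum_delta _ _ (fun _ => u k)) ltn_ord.
apply: eq_bigr => i _; rewrite dlE eq_sym; case: eqP => // e.
by congr (u _); exact: val_inj.
Qed.

Lemma betDl (p : nat) (L : ZpLie p) c (u v w : {ffun 'I_c -> L}) :
  bet (u + v) w = bet u w + bet v w.
Proof.
rewrite /bet -big_split /=; apply: eq_bigr => i _; rewrite -big_split /=.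
by apply: eq_bigr => j _; rewrite ffunE lie_brDl dlD.
Qed.
Lemma betDr (p : nat) (L : ZpLie p) c (u v w : {ffun 'I_c -> L}) :
  bet u (v + w) = bet u v + bet u w.
Proof.
rewrite /bet -big_split /=; apply: eq_bigr => i _; rewrite -big_split /=.
by apply: eq_bigr => j _; rewrite ffunE lie_brDr dlD.
Qed.

Lemma bet_u_dl (p : nat) (L : ZpLie p) c (u : {ffun 'I_c -> L}) n (z : L) :
  bet u (dl c n z) = \sum_(i < c) dl c (i + n).+1 (lie_br (u i) z).
Proof.
have h := LieL L.
rewrite /bet; apply: eq_bigr => i _.
transitivity (\sum_(j < c) (if (j : nat) == n then
    (fun j => dl c (i + j).+1 (lie_br (u i) z)) j else 0)).
  apply: eq_bigr => j _; rewrite dlE; case: eqP => // _.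
  by rewrite (b0r h) dl0.
rewrite (sum_delta _ _ (fun j => dl c (i + j).+1 (lie_br (u i) z))); case: ltnP => // hn.
by rewrite dl_out //; lia.
Qed.

Lemma bet_dl (p : nat) (L : ZpLie p) c i j (x y : L) :
  bet (dl c i x) (dl c j y) = dl c (i + j).+1 (lie_br x y).
Proof.
have h := LieL L.
rewrite bet_u_dl.
transitivity (\sum_(a < c) (if (a : nat) == i then
    (fun a => dl c (a + j).+1 (lie_br x y)) a else 0)).
  apply: eq_bigr => a _; rewrite dlE; case: eqP => // _.
  by rewrite (b0l h) dl0.
rewrite (sum_delta _ _ (fun a => dl c (a + j).+1 (lie_br x y))); case: ltnP => // hn.
by rewrite dl_out //; lia.
Qed.

Lemma bet0r (p : nat) (L : ZpLie p) c (u : {ffun 'I_c -> L}) : bet u 0 = 0.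
Proof. by apply: (addrI (bet u 0)); rewrite -betDr !addr0. Qed.
Lemma bet0l (p : nat) (L : ZpLie p) c (u : {ffun 'I_c -> L}) : bet 0 u = 0.
Proof. by apply: (addrI (bet 0 u)); rewrite -betDl !addr0. Qed.
Lemma betsumr (p : nat) (L : ZpLie p) c (u : {ffun 'I_c -> L}) (I : Type) (r : seq I) (P : pred I) F :
  bet u (\sum_(i <- r | P i) F i) = \sum_(i <- r | P i) bet u (F i).
Proof. by apply: (big_morph (bet u)) => [a b|]; rewrite ?betDr ?bet0r. Qed.
Lemma betsuml (p : nat) (L : ZpLie p) c (u : {ffun 'I_c -> L}) (I : Type) (r : seq I) (P : pred I) F :
  bet (\sum_(i <- r | P i) F i) u = \sum_(i <- r | P i) bet (F i) u.
Proof. by apply: (big_morph (fun x => bet x u)) => [a b|]; rewrite ?betDl ?bet0l. Qed.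

Lemma betC (p : nat) (L : ZpLie p) c (u v : {ffun 'I_c -> L}) : bet v u = - bet u v.
Proof.
have h := LieL L.
rewrite /bet exchange_big -sumrN; apply: eq_bigr => i _; rewrite -sumrN.
by apply: eq_bigr => j _; rewrite (bC h) dlN addnC.
Qed.

Lemma betxx (p : nat) (L : ZpLie p) c (u : {ffun 'I_c -> L}) : bet u u = 0.
Proof.
have h := LieL L.
suff H : forall r : seq 'I_c, bet (\sum_(i <- r) dl c i (u i)) (\sum_(i <- r) dl c i (u i)) = 0.
  by rewrite {1 2}(decomp u); apply: H.
elim => [|a r IH]; first by rewrite big_nil bet0l.
rewrite big_cons betDl !betDr IH addr0 bet_dl (bxx h) dl0 add0r.
by rewrite [bet (\sum_(j <- r) _) _]betC subrr.
Qed.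

Lemma rot3 (M : zmodType) c (F : 'I_c -> 'I_c -> 'I_c -> M) :
  \sum_(a < c) \sum_(b < c) \sum_(e < c) F a b e = \sum_(b < c) \sum_(e < c) \sum_(a < c) F a b e.
Proof. by rewrite exchange_big; apply: eq_bigr => b _; rewrite exchange_big. Qed.

Lemma betbet (p : nat) (L : ZpLie p) c (u v w : {ffun 'I_c -> L}) :
  bet u (bet v w) = \sum_(i < c) \sum_(j < c) \sum_(l < c)
     dl c (i + j + l).+2 (lie_br (u i) (lie_br (v j) (w l))).
Proof.
rewrite {2}/bet betsumr.
transitivity (\sum_(j < c) \sum_(l < c) \sum_(i < c)
     dl c (i + j + l).+2 (lie_br (u i) (lie_br (v j) (w l))));
  last by rewrite (rot3 (fun i j l => dl c (i + j + l).+2 (lie_br (u i) (lie_br (v j) (w l))))).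
apply: eq_bigr => j _; rewrite betsumr; apply: eq_bigr => l _.
by rewrite bet_u_dl; apply: eq_bigr => i _; rewrite addnS addnA.
Qed.

Lemma betJ (p : nat) (L : ZpLie p) c (u v w : {ffun 'I_c -> L}) :
  bet u (bet v w) + bet v (bet w u) + bet w (bet u v) = 0.
Proof.
have h := LieL L.
rewrite !betbet.
rewrite [X in _ + X + _]rot3 [X in _ + X + _]rot3 [X in _ + _ + X]rot3 /=.
rewrite -!big_split /=; apply: big1 => i _; rewrite -!big_split /=; apply: big1 => j _.
rewrite -!big_split /=; apply: big1 => l _.
have e1 : (j + l + i = i + j + l)%N by lia.
have e2 : (l + i + j = i + j + l)%N by lia.
by rewrite e1 e2 -!dlD (bJ h) dl0.
Qed.

Lemma betLie (p : nat) (L : ZpLie p) c : isLieB (@bet p L c).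
Proof. split; [exact: betDl|exact: betDr|exact: betxx|exact: betJ]. Qed.

Definition Wset (p : nat) (L : ZpLie p) c : {set VT L c} :=
  [set v : VT L c | [forall i : 'I_c, v i \in lcs L i]].
Definition Rgen (p : nat) (L : ZpLie p) c : {set VT L c} :=
  [set (dl c i.+1 v *+ p - dl c i v : VT L c) | i : 'I_c, v : L in lcs L i.+1].
Definition Rset (p : nat) (L : ZpLie p) c : {set VT L c} := spanV (Rgen L c).
Definition ROm (p : nat) (L : ZpLie p) c : {set VT L c} :=
  [set w in Wset L c | w *+ p \in Rset L c].
Definition bet1 (p : nat) (L : ZpLie p) c (u v : VT L c) : VT L c := bet u v *+ p.

Lemma WsetP (p : nat) (L : ZpLie p) c (v : VT L c) :
  reflect (forall i : 'I_c, v i \in lcs L i) (v \in Wset L c).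
Proof. by rewrite inE; apply: forallP. Qed.

Lemma W_addsub (p : nat) (L : ZpLie p) c : addsubV (Wset L c).
Proof.
apply/addsubP; split.
  by apply/WsetP => i; rewrite ffunE; exact: as0 (lcs_addsub _ _).
move=> x y /WsetP hx /WsetP hy; apply/WsetP => i.
by rewrite !ffunE; apply: asB; [exact: lcs_addsub|exact: hx|exact: hy].
Qed.

Lemma Wc_W (p : nat) (L : ZpLie p) c : Wc (Wset L c) = Wset L c.
Proof. exact: spanV_id (W_addsub L c). Qed.

Lemma dl_W (p : nat) (L : ZpLie p) c n (x : L) : x \in lcs L n -> (dl c n x : VT L c) \in Wset L c.
Proof.
move=> hx; apply/WsetP => i; rewrite dlE; case: eqP => [->//|_].
exact: as0 (lcs_addsub _ _).
Qed.

Lemma dl0_W (p : nat) (L : ZpLie p) c (x : L) : (dl c 0 x : VT L c) \in Wset L c.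
Proof. by apply: dl_W; rewrite inE. Qed.

Lemma bet_W (p : nat) (L : ZpLie p) c (u v : VT L c) :
  u \in Wset L c -> v \in Wset L c -> (bet u v : VT L c) \in Wset L c.
Proof.
move=> /WsetP hu /WsetP hv; apply/WsetP => k; rewrite /bet sum_ffunE.
apply: asSum; first exact: lcs_addsub.
move=> i _; rewrite sum_ffunE; apply: asSum; first exact: lcs_addsub.
move=> j _; rewrite dlE; case: eqP => [->|_]; last exact: as0 (lcs_addsub _ _).
exact: br_lcs.
Qed.

Lemma MnW (p : nat) (L : ZpLie p) c (u : VT L c) n : u \in Wset L c -> u *+ n \in Wset L c.
Proof. by move=> hu; apply: asMn => //; exact: W_addsub. Qed.

Lemma bet1_W (p : nat) (L : ZpLie p) c (u v : VT L c) :
  u \in Wset L c -> v \in Wset L c -> bet1 u v \in Wset L c.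
Proof. by move=> hu hv; apply: MnW; exact: bet_W. Qed.

Lemma R_addsub (p : nat) (L : ZpLie p) c : addsubV (Rset L c).
Proof. exact: spanV_addsub. Qed.

Lemma R_W (p : nat) (L : ZpLie p) c : Rset L c \subset Wset L c.
Proof.
apply: spanV_min; first exact: W_addsub.
apply/subsetP => z /imset2P[i v _ hv ->].
apply: asB; first exact: W_addsub.
  by apply: MnW; apply: dl_W.
by apply: dl_W; exact: (subsetP (lcs_decr L i)).
Qed.

Lemma Rc_R (p : nat) (L : ZpLie p) c : Rc (Wset L c) (Rset L c) = Rset L c.
Proof.
rewrite /Rc (spanV_id (W_addsub L c)); have -> : Rset L c :&: Wset L c = Rset L c.
  by apply/setIidPl; exact: R_W.
exact: spanV_id (R_addsub L c).
Qed.

Lemma bet_dl_u (p : nat) (L : ZpLie p) c n (x : L) (w : VT L c) :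
  bet (dl c n x) w = \sum_(j < c) dl c (n + j).+1 (lie_br x (w j)).
Proof.
rewrite {1}(decomp w) betsumr; apply: eq_bigr => j _; exact: bet_dl.
Qed.

Lemma R_ideal (p : nat) (L : ZpLie p) c (r w : VT L c) :
  r \in Rset L c -> w \in Wset L c -> bet r w \in Rset L c.
Proof.
move=> hr /WsetP hw.
have hB : addsubV [set z : VT L c | bet z w \in Rset L c].
  by apply: pre_addsub; [move=> a b; rewrite (bBl (betLie L c))| exact: R_addsub].
suff: Rset L c \subset [set z : VT L c | bet z w \in Rset L c] by move/subsetP/(_ r hr); rewrite inE.
apply: spanV_min => //; apply/subsetP => z /imset2P[i v _ hv ->]; rewrite inE.
rewrite (bBl (betLie L c)) (bMnl (betLie L c)) !bet_dl_u -sumrMnl -sumrB.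
apply: asSum; first exact: R_addsub.
move=> j _; rewrite -dlMn.
case: (ltnP (i + j).+1 c) => hij.
  apply: (subsetP (spanV_sub _)); apply/imset2P.
  exists (Ordinal hij) (lie_br v (w j)); first by rewrite inE.
    by have := br_lcs hv (hw j); rewrite addSn.
  by rewrite /= dlMn addSn.
rewrite !dl_out ?subrr; [exact: as0 (R_addsub _ _)| lia | lia].
Qed.

Lemma ROmE (p : nat) (L : ZpLie p) c (w : VT L c) :
  (w \in ROm L c) = (w \in Wset L c) && (w *+ p \in Rset L c).
Proof. by rewrite /ROm in_set. Qed.

Lemma RO_addsub (p : nat) (L : ZpLie p) c : addsubV (ROm L c).
Proof.
apply/addsubP; split.
  by rewrite ROmE as0 ?W_addsub //= mul0rn as0 // R_addsub.
move=> x y; rewrite !ROmE => /andP[hx hx'] /andP[hy hy'].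
by rewrite asB ?W_addsub //= mulrnBl asB // R_addsub.
Qed.

Lemma RO_W (p : nat) (L : ZpLie p) c : ROm L c \subset Wset L c.
Proof. by apply/subsetP => x; rewrite ROmE => /andP[]. Qed.

Lemma R_RO (p : nat) (L : ZpLie p) c : Rset L c \subset ROm L c.
Proof.
apply/subsetP => x hx; rewrite ROmE (subsetP (R_W L c)) //=.
by apply: asMn => //; exact: R_addsub.
Qed.

Lemma Rc_RO (p : nat) (L : ZpLie p) c : Rc (Wset L c) (ROm L c) = ROm L c.
Proof.
rewrite /Rc (spanV_id (W_addsub L c)); have -> : ROm L c :&: Wset L c = ROm L c.
  by apply/setIidPl; exact: RO_W.
exact: spanV_id (RO_addsub L c).
Qed.

Lemma bet1Lie (p : nat) (L : ZpLie p) c : isLieB (@bet1 p L c).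
Proof.
have h := betLie L c.
split; rewrite /bet1.
- by move=> x y z; rewrite (bDl h) mulrnDl.
- by move=> x y z; rewrite (bDr h) mulrnDl.
- by move=> x; rewrite (bxx h) mul0rn.
- by move=> x y z; rewrite !(bMnr h) -!mulrnDl (bJ h) !mul0rn.
Qed.

Lemma qhypsR (p : nat) (L : ZpLie p) c : qhyps (Wset L c) (Rset L c) (@bet1 p L c).
Proof.
split; first exact: bet1Lie.
  by rewrite /Wc (spanV_id (W_addsub L c)); exact: bet1_W.
rewrite Rc_R /Wc (spanV_id (W_addsub L c)) => u v hu hv.
by apply: asMn; [exact: R_addsub| exact: R_ideal].
Qed.

Lemma qhypsRO (p : nat) (L : ZpLie p) c : qhyps (Wset L c) (ROm L c) (@bet1 p L c).
Proof.
split; first exact: bet1Lie.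
  by rewrite /Wc (spanV_id (W_addsub L c)); exact: bet1_W.
rewrite Rc_RO /Wc (spanV_id (W_addsub L c)) => u v; rewrite ROmE => /andP[hu hu'] hv.
rewrite ROmE bet1_W //= /bet1 -(bMnl (betLie L c)); apply: asMn; first exact: R_addsub.
exact: R_ideal.
Qed.

Lemma expL (p : nat) (L : ZpLie p) (x : L) : x *+ (p ^ logn p #|L|) = 0.
Proof.
rewrite -p_part part_pnat_id ?lie_pgroup // -zmodXgE -(cardsT L).
by apply: expg_cardG; rewrite inE.
Qed.

Lemma expV (p : nat) (L : ZpLie p) c (v : VT L c) : v \in Wc (Wset L c) -> v *+ (p ^ logn p #|L|) = 0.
Proof. by move=> _; apply/ffunP => k; rewrite ffunMnE expL ffunE. Qed.

Definition Lh (p : nat) (pp : prime p) (L : ZpLie p) c : ZpLie p :=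
  qLie pp (@qhypsR p L c) (@expV p L c).
Definition QL (p : nat) (pp : prime p) (L : ZpLie p) c : ZpLie p :=
  qLie pp (@qhypsRO p L c) (@expV p L c).

Lemma img_addsub (V : finZmodType) n : addsubV [set x *+ n | x in [set: V]].
Proof.
apply/addsubP; split; first by apply/imsetP; exists 0; rewrite ?inE ?mul0rn.
move=> _ _ /imsetP[x _ ->] /imsetP[y _ ->]; apply/imsetP; exists (x - y); rewrite ?inE //.
by rewrite mulrnBl.
Qed.

Lemma Lh_br (p : nat) (pp : prime p) (L : ZpLie p) c (u v : VT L c) :
  u \in Wset L c -> v \in Wset L c ->
  @lie_br p (Lh pp L c) (qclass (Wset L c) (Rset L c) u) (qclass (Wset L c) (Rset L c) v)
  = qclass (Wset L c) (Rset L c) (bet1 u v).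
Proof. by move=> hu hv; apply: (qbr_class (qhypsR L c)); rewrite /Wc spanV_id ?W_addsub. Qed.

Lemma QL_br (p : nat) (pp : prime p) (L : ZpLie p) c (u v : VT L c) :
  u \in Wset L c -> v \in Wset L c ->
  @lie_br p (QL pp L c) (qclass (Wset L c) (ROm L c) u) (qclass (Wset L c) (ROm L c) v)
  = qclass (Wset L c) (ROm L c) (bet1 u v).
Proof. by move=> hu hv; apply: (qbr_class (qhypsRO L c)); rewrite /Wc spanV_id ?W_addsub. Qed.

Lemma Lh_surj (p : nat) (pp : prime p) (L : ZpLie p) c (a : Lh pp L c) :
  exists2 u, u \in Wset L c & a = qclass (Wset L c) (Rset L c) u.
Proof. by have := qclass_surj a; rewrite /Wc spanV_id ?W_addsub. Qed.
Lemma QL_surj (p : nat) (pp : prime p) (L : ZpLie p) c (a : QL pp L c) :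
  exists2 u, u \in Wset L c & a = qclass (Wset L c) (ROm L c) u.
Proof. by have := qclass_surj a; rewrite /Wc spanV_id ?W_addsub. Qed.

Lemma WcE (p : nat) (L : ZpLie p) c (u : VT L c) : (u \in Wc (Wset L c)) = (u \in Wset L c).
Proof. by rewrite /Wc spanV_id ?W_addsub. Qed.

Lemma Lh_powerful (p : nat) (pp : prime p) (L : ZpLie p) c : powerful (Lh pp L c).
Proof.
rewrite /powerful zspanE; apply: spanV_min; first exact: img_addsub.
apply/subsetP => _ /imset2P[a b _ _ ->].
have [u hu ->] := Lh_surj a; have [v hv ->] := Lh_surj b.
rewrite Lh_br // /bet1 qclassMn ?WcE ?bet_W //.
by apply/imsetP; eexists; rewrite ?inE.
Qed.

Lemma Lh_pcentral (p : nat) (pp : prime p) (L : ZpLie p) c : pcentral (Lh pp L c).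
Proof.
apply/subsetP => x; rewrite !inE => /eqP hx; apply/forallP => y.
have [u hu ex] := Lh_surj x; have [v hv ->] := Lh_surj y.
move: hx; rewrite ex -qclassMn ?WcE // => /qclass_eq0; rewrite WcE MnW // Rc_R => /(_ isT) hup.
rewrite Lh_br // /bet1 -(bMnl (betLie L c)); apply/eqP/qclass_eq0; rewrite ?WcE ?bet_W ?MnW // Rc_R.
exact: R_ideal.
Qed.

Definition piL (p : nat) (pp : prime p) (L : ZpLie p) c (a : Lh pp L c) : QL pp L c :=
  qclass (Wset L c) (ROm L c) (qval a).

Lemma piE (p : nat) (pp : prime p) (L : ZpLie p) c (u : VT L c) : u \in Wset L c ->
  piL (qclass (Wset L c) (Rset L c) u : Lh pp L c) = qclass (Wset L c) (ROm L c) u.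
Proof.
move=> hu; rewrite /piL; apply: qclass_congr; rewrite ?WcE //.
  by have := qval_in (qclass (Wset L c) (Rset L c) u); rewrite WcE.
rewrite Rc_RO; apply: (subsetP (R_RO L c)).
have h := @qval_class_mod _ (Wset L c) (Rset L c) u; rewrite Rc_R WcE in h; exact: h hu.
Qed.

Lemma pi_hom (p : nat) (pp : prime p) (L : ZpLie p) c : lie_hom (@piL p pp L c).
Proof.
split => a b; have [u hu ->] := Lh_surj a; have [v hv ->] := Lh_surj b.
  rewrite -qclass_add ?WcE // !piE ?asD ?W_addsub //.
  by rewrite qclass_add ?WcE.
by rewrite Lh_br // !piE ?bet1_W // QL_br.
Qed.

Lemma pi_surj (p : nat) (pp : prime p) (L : ZpLie p) c (y : QL pp L c) :
  exists x : Lh pp L c, piL x = y.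
Proof.
have [u hu ->] := QL_surj y.
by exists (qclass (Wset L c) (Rset L c) u : Lh pp L c); rewrite piE.
Qed.

Lemma pi_ker (p : nat) (pp : prime p) (L : ZpLie p) c (x : Lh pp L c) :
  piL x = 0 <-> x \in Omega1 (Lh pp L c).
Proof.
have [u hu ->] := Lh_surj x; rewrite piE // inE.
rewrite -qclassMn ?WcE //.
split => [/qclass_eq0|/eqP/qclass_eq0].
  rewrite WcE Rc_RO => /(_ hu); rewrite ROmE => /andP[_ h].
  by apply/eqP/qclass_eq0; rewrite ?WcE ?MnW // Rc_R.
rewrite WcE MnW // Rc_R => /(_ isT) h.
by apply/qclass_eq0; rewrite ?WcE // Rc_RO ROmE hu.
Qed.

Definition iotaL (p : nat) (pp : prime p) (L : ZpLie p) c (x : L) : QL pp L c :=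
  qclass (Wset L c) (ROm L c) (dl c 0 x : VT L c).

Lemma iota_hom (p : nat) (pp : prime p) (L : ZpLie p) c : lie_hom (@iotaL p pp L c).
Proof.
split => x y; rewrite /iotaL.
  by rewrite dlD qclass_add ?WcE ?dl0_W.
rewrite QL_br ?dl0_W // /bet1 bet_dl; apply: qclass_congr; rewrite ?WcE ?dl0_W ?MnW ?dl_W //.
  by apply: lcs_br; rewrite inE.
rewrite Rc_RO -opprB; apply: asN; first exact: RO_addsub.
case: (posnP c) => [c0|cpos].
  by rewrite !dl_out ?c0 // mul0rn subrr; exact: as0 (RO_addsub _ _).
apply: (subsetP (R_RO L c)); apply: (subsetP (spanV_sub _)); apply/imset2P.
exists (Ordinal cpos) (lie_br x y) => //.
by apply: lcs_br; rewrite inE.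
Qed.

Definition plusc (V : finZmodType) (B : {set V}) (x : V) m : {set V} :=
  (fun bk : V * 'I_m => bk.1 + x *+ (bk.2 : nat)) @: setX B [set: 'I_m].

Lemma plusc_card (V : finZmodType) (B : {set V}) (x : V) m : (#|plusc B x m| <= #|B| * m)%N.
Proof. by rewrite (leq_trans (leq_imset_card _ _)) // cardsX cardsT card_ord. Qed.

Lemma pluscP (V : finZmodType) (B : {set V}) (x : V) m y :
  reflect (exists2 b, b \in B & exists2 k, (k < m)%N & y = b + x *+ k) (y \in plusc B x m).
Proof.
apply: (iffP imsetP) => [[[b k]] /setXP[hb _] ->|[b hb [k hk ->]]].
  by exists b => //; exists k.
by exists (b, Ordinal hk); rewrite ?inE ?hb.
Qed.

Lemma plusc_addsub (V : finZmodType) (B : {set V}) (x : V) m :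
  (0 < m)%N -> addsubV B -> x *+ m \in B -> addsubV (plusc B x m).
Proof.
move=> m0 hB hx; apply/addsubP; split.
  by apply/pluscP; exists 0; [exact: as0| exists 0%N => //; rewrite mulr0n addr0].
move=> _ _ /pluscP[b hb [k hk ->]] /pluscP[b' hb' [k' hk' ->]].
case: (leqP k' k) => hkk.
  apply/pluscP; exists (b - b'); first exact: asB.
  exists (k - k')%N; first by rewrite (leq_ltn_trans (leq_subr _ _)).
  by rewrite mulrnBr // opprD addrACA.
apply/pluscP; exists (b - b' - x *+ m); first by apply: asB => //; exact: asB.
exists (k + m - k')%N; first by lia.
rewrite mulrnBr; last by lia.
rewrite mulrnDr (addrC (x *+ k) (x *+ m)) opprD !addrA subrK (addrAC b) //.
Qed.

Lemma span_card (V : finZmodType) (s : seq V) (B : {set V}) m :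
  (0 < m)%N -> addsubV B -> (forall x, x \in s -> x *+ m \in B) ->
  (#|spanV (B :|: [set x in s])| <= #|B| * m ^ size s)%N.
Proof.
elim: s B => [|x s IH] B m0 hB hs.
  rewrite expn0 muln1; have -> : B :|: [set x in [::]] = B.
    by apply/setP => y; rewrite !inE orbF.
  by rewrite spanV_id.
have hx : x *+ m \in B by apply: hs; rewrite inE eqxx.
have hB' := plusc_addsub m0 hB hx.
have sB : B \subset plusc B x m.
  by apply/subsetP => b hb; apply/pluscP; exists b => //; exists 0%N => //; rewrite mulr0n addr0.
have hs' : forall y, y \in s -> y *+ m \in plusc B x m.
  by move=> y hy; apply: (subsetP sB); apply: hs; rewrite inE hy orbT.
apply: (leq_trans (subset_leq_card (_ : _ \subset spanV (plusc B x m :|: [set x in s])))).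
  apply: spanV_min; first exact: spanV_addsub.
  apply/subsetP => y; rewrite in_setU in_set inE => /orP[hy|/orP[/eqP ->|hy]];
    apply: (subsetP (spanV_sub _)); rewrite in_setU.
  - by rewrite (subsetP sB).
  - apply/orP; left; case: (ltnP 1 m) => hm.
      by apply/pluscP; exists 0; [exact: as0| exists 1%N => //; rewrite add0r mulr1n].
    have m1 : m = 1%N by lia.
    apply/pluscP; exists x; first by move: hx; rewrite m1 mulr1n.
    by exists 0%N; rewrite ?m1 // mulr0n addr0.
  - by rewrite in_set hy orbT.
apply: (leq_trans (IH _ m0 hB' hs')).
by rewrite /= expnS mulnA leq_mul2r plusc_card orbT.
Qed.

Lemma ker_img (V : finZmodType) (f : V -> V) :
  (forall x y, f (x + y) = f x + f y) ->
  (#|[set x | f x == 0%R]| * #|f @: [set: V]| <= #|V|)%N.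
Proof.
move=> hf.
have f0 : f 0 = 0 :> V by apply: (addrI (f 0)); rewrite -hf !addr0.
pose sec y := odflt 0 [pick x | f x == y].
have secP : forall y, y \in f @: [set: V] -> f (sec y) = y.
  move=> y /imsetP[x _ ->]; rewrite /sec; case: pickP => [z /eqP //|/(_ x)]; by rewrite eqxx.
pose g (ky : V * V) := ky.1 + sec ky.2.
rewrite -cardsX -(card_in_imset (f := g)); first exact: max_card.
move=> [k y] [k' y'] /setXP[/= hk hy] /setXP[/= hk' hy'] /= e.
have : f (g (k, y)) = f (g (k', y')) by rewrite e.
rewrite /g /= !hf !secP //; move: hk hk'; rewrite !inE => /eqP -> /eqP ->; rewrite !add0r => ey.
by move: e; rewrite /g /= ey => /addIr ->.
Qed.

Lemma qclass_sum (V : finZmodType) (W R : {set V}) (I : Type) (r : seq I) (F : I -> V) :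
  (forall i, F i \in Wc W) -> qclass W R (\sum_(i <- r) F i) = \sum_(i <- r) qclass W R (F i).
Proof.
move=> hF; elim: r => [|a r IH]; first by rewrite !big_nil qclass0.
rewrite !big_cons qclass_add ?IH //; apply: asSum => //; exact: Wc_addsub.
Qed.

Lemma qclass_out (V : finZmodType) (W R : {set V}) v : v \notin Wc W -> qclass W R v = 0.
Proof.
move=> hv; rewrite /qclass /insubd insubF //; apply/negP => /andP[h _].
apply: (negP hv); have := asB (Wc_addsub W) h (RcW (qrepP W R v)).
by rewrite opprB addrC subrK.
Qed.

Definition gens (p : nat) (L : ZpLie p) c (S : seq L) (R' : {set VT L c}) : seq (qT (Wset L c) R') :=
  [seq qclass (Wset L c) R' (dl c i x.1 : VT L c) | i <- iota 0 c, x <- monA S c].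

Lemma gens_span (p : nat) (L : ZpLie p) c (S : seq L) (R' : {set VT L c}) :
  lie_gen [set x in S] = [set: L] -> lcs L c = [set 0] ->
  forall a : qT (Wset L c) R', a \in spanV [set x in gens S R'].
Proof.
move=> hg hc a; have [u hu ->] := qclass_surj a.
rewrite WcE in hu; rewrite (decomp u) qclass_sum; last first.
  by move=> i; rewrite WcE; apply: dl_W; move/WsetP: hu; apply.
apply: asSum; first exact: spanV_addsub.
move=> i _; move/WsetP: hu => /(_ i) hui.
pose B := [set y : L | (y \in lcs L i) && (qclass (Wset L c) R' (dl c i y : VT L c) \in spanV [set x in gens S R'])].
suff: lcs L i \subset B by move/subsetP/(_ _ hui); rewrite inE => /andP[].
apply: subset_trans (lcs_span hg hc i) _; apply: spanV_min.
  apply/addsubP; split.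
    by rewrite inE as0 ?lcs_addsub //= dl0 qclass0 as0 // spanV_addsub.
  move=> y z; rewrite !inE => /andP[hy hy'] /andP[hz hz'].
  rewrite asB ?lcs_addsub //= dlB qclassB ?WcE ?dl_W //.
  by apply: asB => //; exact: spanV_addsub.
apply/subsetP => y /MkP[x hx [<- hk]]; rewrite inE.
have hxi : x.1 \in lcs L i by apply: (subsetP (lcs_mono L hk)); exact: monA_lcs hx.
rewrite hxi /=; apply: (subsetP (spanV_sub _)); rewrite inE.
by apply: (allpairs_f (fun i x => qclass (Wset L c) R' (dl c i x.1 : VT L c))) => //; rewrite mem_iota /=.
Qed.

Lemma size_gens (p : nat) (L : ZpLie p) c (S : seq L) (R' : {set VT L c}) :
  size (gens S R') = (c * size (monA S c))%N.
Proof. by rewrite size_allpairs size_iota. Qed.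

Lemma Lh_gen (p : nat) (pp : prime p) (L : ZpLie p) c d :
  d_generated L d -> lcs L c = [set 0] -> d_generated (Lh pp L c) (c * sz d c).
Proof.
move=> [S [hS hg]] hc.
exists (gens S (Rset L c)); split.
  by rewrite size_gens leq_mul2l size_monA ?orbT.
apply/eqP; rewrite eqEsubset subsetT /=; apply/subsetP => a _.
apply/bigcapP => B /andP[/andP[hB _] hSB].
have := subsetP (spanV_min hB hSB) a; apply.
exact: gens_span.
Qed.

Lemma chainR (p : nat) (L : ZpLie p) c i (v : L) :
  (i <= c)%N -> v \in lcs L i -> (dl c i v *+ (p ^ i) - dl c 0 v : VT L c) \in Rset L c.
Proof.
elim: i => [|i IH] hi hv; first by rewrite expn0 mulr1n subrr; exact: as0 (R_addsub _ _).
have hv' : v \in lcs L i by exact: (subsetP (lcs_decr L i)).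
have -> : (dl c i.+1 v *+ (p ^ i.+1) - dl c 0 v : VT L c)
   = (dl c i.+1 v *+ p - dl c i v) *+ (p ^ i) + (dl c i v *+ (p ^ i) - dl c 0 v).
  by rewrite expnS mulrnA mulrnBl addrA subrK.
apply: asD; first exact: R_addsub.
  apply: asMn; first exact: R_addsub.
  apply: (subsetP (spanV_sub _)); apply/imset2P.
  by exists (Ordinal hi) v; rewrite ?inE.
by apply: IH => //; exact: ltnW.
Qed.

Lemma img_hom_addsub (p : nat) (L M : ZpLie p) (f : L -> M) :
  (forall x y, f (x + y) = f x + f y) -> addsubV (f @: [set: L]).
Proof.
move=> hf.
have f0 : f 0 = 0 by apply: (addrI (f 0)); rewrite -hf !addr0.
have fN : forall x, f (- x) = - f x by move=> x; apply: (addrI (f x)); rewrite -hf !subrr.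
apply/addsubP; split; first by apply/imsetP; exists 0; rewrite ?inE.
move=> _ _ /imsetP[x _ ->] /imsetP[y _ ->]; apply/imsetP; exists (x - y); rewrite ?inE //.
by rewrite hf fN.
Qed.

Lemma iotaMn (p : nat) (pp : prime p) (L : ZpLie p) c (x : L) n :
  iotaL pp c (x *+ n) = iotaL pp c x *+ n.
Proof. by rewrite /iotaL dlMn qclassMn // WcE dl0_W. Qed.

Lemma QL_index (p : nat) (pp : prime p) (L : ZpLie p) c d :
  d_generated L d -> lcs L c = [set 0] ->
  (#|QL pp L c| <= #|iotaL pp c @: [set: L]| * (p ^ c) ^ (c * sz d c))%N.
Proof.
move=> [S [hS hg]] hc.
have hm : (0 < p ^ c)%N by rewrite expn_gt0 prime_gt0.
have hB := img_hom_addsub (M := QL pp L c) (proj1 (iota_hom pp L c)).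
have hs : forall x, x \in gens S (ROm L c) -> x *+ (p ^ c) \in iotaL pp c @: [set: L].
  move=> _ /allpairsP[[i y] [/= hi hy ->]].
  move: hi; rewrite mem_iota add0n => hi.
  case: (boolP (y.1 \in lcs L i)) => hyi; last first.
    rewrite qclass_out ?mul0rn; first by apply/imsetP; exists 0; rewrite ?inE // /iotaL dl0 qclass0.
    rewrite WcE; apply/negP => /WsetP /(_ (Ordinal hi)); rewrite dlE /= eqxx.
    by apply/negP.
  have hci : (i <= c)%N by exact: ltnW.
  have e : (p ^ c = p ^ i * p ^ (c - i))%N by rewrite -expnD subnKC.
  rewrite -qclassMn ?WcE ?dl_W // e mulrnA qclassMn ?WcE ?MnW ?dl_W //.
  have -> : qclass (Wset L c) (ROm L c) (dl c i y.1 *+ p ^ i : VT L c) = iotaL pp c y.1.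
    apply: qclass_congr; rewrite ?WcE ?MnW ?dl_W ?dl0_W //.
    by rewrite Rc_RO; apply: (subsetP (R_RO L c)); exact: chainR.
  by rewrite -iotaMn; apply/imsetP; eexists; rewrite ?inE.
have := span_card hm hB hs; rewrite size_gens => hcard.
rewrite -cardsT; apply: leq_trans (subset_leq_card _) (leq_trans hcard _).
  apply/subsetP => a _; apply: (subsetP (spanV_mono (subsetUr _ _))).
  exact: gens_span.
by rewrite leq_mul2l leq_pexp2l ?orbT // leq_mul2l size_monA ?orbT.
Qed.

Definition eps (p : nat) (L : ZpLie p) c (u : VT L c) : L :=
  \sum_(i < c) u i *+ (p ^ (c.-1 - i)).

Lemma epsB (p : nat) (L : ZpLie p) c (u v : VT L c) : eps (u - v) = eps u - eps v.
Proof.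
rewrite /eps -sumrB; apply: eq_bigr => i _.
by rewrite !ffunE mulrnBl.
Qed.

Lemma epsMn (p : nat) (L : ZpLie p) c (u : VT L c) m : eps (u *+ m) = eps u *+ m.
Proof.
rewrite /eps -sumrMnl; apply: eq_bigr => i _.
by rewrite ffunMnE mulrnAC.
Qed.

Lemma eps_dl (p : nat) (L : ZpLie p) c n (x : L) :
  eps (dl c n x : VT L c) = if (n < c)%N then x *+ (p ^ (c.-1 - n)) else 0.
Proof.
rewrite /eps -(sum_delta _ _ (fun i => x *+ (p ^ (c.-1 - i)))).
by apply: eq_bigr => i _; rewrite dlE; case: eqP => [->|]; rewrite ?mul0rn.
Qed.

Lemma eps_R (p : nat) (L : ZpLie p) c (r : VT L c) :
  lcs L c = [set 0] -> r \in Rset L c -> eps r = 0.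
Proof.
move=> hc hr.
suff: Rset L c \subset [set u : VT L c | eps u == 0] by move/subsetP/(_ r hr); rewrite inE => /eqP.
apply: spanV_min.
  apply/addsubP; split; first by rewrite inE -(subrr (0 : VT L c)) epsB subrr.
  by move=> x y; rewrite !inE epsB => /eqP -> /eqP ->; rewrite subrr.
apply/subsetP => _ /imset2P[i v _ hv ->]; rewrite inE epsB epsMn !eps_dl ltn_ord.
case: ltnP => hi.
  have e : (c.-1 - i = (c.-1 - i.+1).+1)%N by lia.
  by rewrite e expnSr mulrnA subrr.
have ec : i.+1 = c by have := ltn_ord i; lia.
move: hv; rewrite ec hc inE => /eqP ->.
by rewrite mul0rn mul0rn subrr.
Qed.

Lemma J_omega (p : nat) (pp : prime p) (L : ZpLie p) c (x : L) :
  lcs L c = [set 0] -> iotaL pp c x = 0 -> x *+ (p ^ c) = 0.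
Proof.
move=> hc; rewrite /iotaL => /qclass_eq0; rewrite WcE dl0_W Rc_RO => /(_ isT).
rewrite ROmE => /andP[_ h]; have := eps_R hc h; rewrite epsMn eps_dl.
case: (posnP c) => [c0|cpos].
  move=> _; have : x \in lcs L c by rewrite c0 inE.
  by rewrite hc inE => /eqP ->; rewrite mul0rn.
by rewrite subn0 -mulrnA -expnSr prednK.
Qed.

Lemma Omega_bound (p : nat) (pp : prime p) (L : ZpLie p) c d :
  d_generated L d -> lcs L c = [set 0] ->
  (#|[set x : L | x *+ (p ^ c) == 0%R]| <= (p ^ c) ^ sz d c)%N.
Proof.
move=> [S [hS hg]] hc.
have hm : (0 < p ^ c)%N by rewrite expn_gt0 prime_gt0.
have hk := ker_img (f := fun x : L => x *+ (p ^ c)) (fun x y => mulrnDl _ x y).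
have hB := img_addsub L (p ^ c).
have hs : forall x, x \in [seq y.1 | y <- monA S c] -> x *+ (p ^ c) \in [set x *+ (p ^ c) | x in [set: L]].
  by move=> x _; apply/imsetP; exists x; rewrite ?inE.
have hcard := span_card hm hB hs.
have hL : (#|L| <= #|[set x *+ (p ^ c) | x in [set: L]]| * (p ^ c) ^ sz d c)%N.
  rewrite -cardsT; apply: leq_trans (subset_leq_card _) (leq_trans hcard _).
    apply: subset_trans (lcs_span0 hg hc) _; apply: spanV_mono.
    apply/subsetP => y /MkP[x hx [<- _]]; rewrite in_setU in_set map_f ?orbT //.
  by rewrite leq_mul2l leq_pexp2l ?orbT // size_map size_monA.
have hI : (0 < #|[set x *+ (p ^ c) | x in [set: L]]|)%N.
  by apply/card_gt0P; exists 0; apply/imsetP; exists 0; rewrite ?inE ?mul0rn.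
rewrite -(leq_pmul2r hI); apply: leq_trans hk _; by rewrite mulnC.
Qed.

Theorem theorem3p6 :
  exists (g : nat -> nat -> nat) (f : nat -> nat -> nat -> nat),
  forall (p : nat), prime p ->
  forall (L : ZpLie p) (d c : nat),
    d_generated L d -> nil_class L c ->
    exists (Lh : ZpLie p) (J : {set L}),
      [/\ powerful Lh, pcentral Lh, d_generated Lh (g d c),
          lie_ideal J & (#|J| <= f p c d)%N] /\
      exists (Q : ZpLie p) (pi : Lh -> Q) (iota : L -> Q),
        [/\ lie_hom pi, (forall y : Q, exists x : Lh, pi x = y)
           & (forall x : Lh, pi x = 0 <-> x \in Omega1 Lh)] /\
        [/\ lie_hom iota, (forall x : L, iota x = 0 <-> x \in J)
           & (#|Q| %/ #|iota @: [set: L]| <= f p c d)%N].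
Proof.
exists (fun d c => c * sz d c)%N, (fun p c d => (p ^ c) ^ (c * sz d c + sz d c))%N.
move=> p pp L d c hd [hc _].
have hm : (0 < p ^ c)%N by rewrite expn_gt0 prime_gt0.
have [iD iB] := iota_hom pp L c.
exists (Lh pp L c), [set x | iotaL pp c x == 0]; split; first split.
- exact: Lh_powerful.
- exact: Lh_pcentral.
- exact: Lh_gen.
- apply/andP; split.
    rewrite addsubE; apply/addsubP; split.
      by rewrite inE /iotaL dl0 qclass0.
    move=> x y; rewrite !inE => /eqP hx /eqP hy.
    have iN : forall z : L, iotaL pp c (- z) = - iotaL pp c z.
      move=> z; have := iD z (- z).
      have -> : iotaL pp c (z - z) = 0 by rewrite subrr /iotaL dl0 qclass0.
      by move/esym/eqP; rewrite addr_eq0 => /eqP ->; rewrite opprK.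
    by rewrite iD iN hx hy subrr.
  apply/forall_inP => x; rewrite inE => /eqP hx; apply/forallP => y.
  by rewrite inE iB hx (b0l (LieL _)).
- apply: leq_trans (subset_leq_card (_ : _ \subset [set x : L | x *+ (p ^ c) == 0%R])) _.
    by apply/subsetP => x; rewrite !inE => /eqP /(J_omega hc) ->.
  apply: leq_trans (Omega_bound pp hd hc) _.
  by rewrite leq_pexp2l // leq_addl.
exists (QL pp L c), (@piL p pp L c), (iotaL pp c); split; split.
- exact: pi_hom.
- exact: pi_surj.
- exact: pi_ker.
- by split.
- by move=> x; rewrite inE; split => [->|/eqP].
- have hI : (0 < #|iotaL pp c @: [set: L]|)%N.
    by apply/card_gt0P; exists (iotaL pp c 0); apply/imsetP; exists 0; rewrite ?inE.
  apply: leq_trans (leq_div2r _ (QL_index pp hd hc)) _.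
  rewrite mulnC mulnK //.
  by rewrite leq_pexp2l // leq_addr.
Qed.
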